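(* Let $n\ge 2k\ge 2$ and $i\in\{0,1,\ldots,k-1\}$. If the generalized Johnson graph $J(n,k,i)$ admits perfect state transfer, then $n=2k$.
   Context: For integers $n\ge 2k$ and $0\le i\le k$, $J(n,k,i)$ is the graph whose vertices are the $k$-subsets of $\{1,\ldots,n\}$, with $A\sim B$ iff $|A\cap B|=i$. For a simple graph $X$ with adjacency matrix $A$, let $\mathcal{H}_X(t)=e^{itA}$. $X$ admits perfect state transfer (PST) from a vertex $u$ to a vertex $v\neq u$ at time $\tau>0$ if $|\mathcal{H}_X(\tau)_{u,v}|=1$; $X$ admits PST if this happens for some $u\ne v$ and some $\tau>0$. *)

(* Defs.v *)
From Stdlib Require Import Reals.
From mathcomp Require Import all_boot.

Set Implicit Arguments.
Unset Strict Implicit.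
Unset Printing Implicit Defensive.

Definition jvert (n k : nat) := {A : {set 'I_n} | #|A| == k}.

Definition jadj (n k i : nat) (A B : jvert n k) : bool :=
  #|(val A) :&: (val B)| == i.

(* walks m u v = (A^m)_{u,v}, A the adjacency matrix of J(n,k,i). *)
Fixpoint walks (n k i m : nat) (u v : jvert n k) : nat :=
  match m with
  | 0 => (u == v) : nat
  | m'.+1 => \sum_(w : jvert n k | jadj i u w) walks i m' w v
  end.

Local Open Scope R_scope.

(* e^{itA}_{u,v} = sum_m (it)^m/m! (A^m)_{u,v}; real part re, imag part im. *)
Definition re_term (n k i : nat) (t : R) (u v : jvert n k) (m : nat) : R :=
  (-1) ^ m * t ^ (2 * m)%N / INR ((2 * m)%N `!) * INR (walks i (2 * m) u v).

Definition im_term (n k i : nat) (t : R) (u v : jvert n k) (m : nat) : R :=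
  (-1) ^ m * t ^ (2 * m + 1)%N / INR ((2 * m + 1)%N `!)
  * INR (walks i (2 * m + 1) u v).

Definition abs_H_eq1 (n k i : nat) (t : R) (u v : jvert n k) : Prop :=
  exists re im : R,
    infinite_sum (re_term i t u v) re /\
    infinite_sum (im_term i t u v) im /\
    sqrt (re ^ 2 + im ^ 2) = 1.

Definition PST_from_to (n k i : nat) (u v : jvert n k) (tau : R) : Prop :=
  u <> v /\ 0 < tau /\ abs_H_eq1 i tau u v.

Definition admits_PST (n k i : nat) : Prop :=
  exists (u v : jvert n k) (tau : R), PST_from_to i u v tau.

(* Main.v *)
Require Import Defs.
From Stdlib Require Import Reals Lra Lia.
From Coquelicot Require Import Coquelicot.
From mathcomp Require Import all_boot ssralg ssrnum zify.
From mathcomp Require Import Rstruct.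
From mathcomp Require Import ring.
Set Implicit Arguments. Unset Strict Implicit. Unset Printing Implicit Defensive.
Import GRing.Theory Num.Theory.

Section Comb.
Local Open Scope nat_scope.

Lemma walks_add n k i p q (u v : jvert n k) :
  walks i (p + q) u v = \sum_w walks i p u w * walks i q w v.
Proof.
elim: p u => [|p IH] u.
  rewrite add0n /= (bigD1 u) //= eqxx mul1n big1 ?addn0 // => w wu.
  by rewrite eq_sym (negbTE wu).
rewrite addSn /=.
rewrite (eq_bigr _ (fun x _ => IH x)).
rewrite exchange_big /=; apply: eq_bigr => w _.
by rewrite big_distrl.
Qed.

Lemma walks1 n k i (u w : jvert n k) : walks i 1 u w = jadj i u w.
Proof.
rewrite /=; case h: (jadj i u w).
  rewrite (bigD1 w) //= eqxx big1 // => x /andP[_ xw]; by rewrite (negbTE xw).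
rewrite big1 // => x hx; case: eqP => // xw; by rewrite -xw hx in h.
Qed.

Lemma jadj_sym n k i (u w : jvert n k) : jadj i u w = jadj i w u.
Proof. by rewrite /jadj setIC. Qed.

Lemma walks_sym n k i m (u v : jvert n k) : walks i m u v = walks i m v u.
Proof.
elim: m u v => [|m IH] u v; first by rewrite /= eq_sym.
rewrite (_ : walks i m.+1 v u = walks i (1 + m) v u) // walks_add.
rewrite (_ : walks i m.+1 u v = walks i (m + 1) u v); last by rewrite addn1.
rewrite walks_add.
apply: eq_bigr => w _; by rewrite !walks1 jadj_sym IH mulnC.
Qed.

Definition swp n (x y z : 'I_n) : 'I_n := if z == x then y else if z == y then x else z.

Lemma swpK n (x y : 'I_n) : involutive (swp x y).
Proof.
move=> z; rewrite /swp.
case: (eqVneq z x) => [->|zx]; first by rewrite eqxx; case: eqP.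
case: (eqVneq z y) => [->|zy]; first by rewrite eqxx.
by rewrite (negbTE zx) (negbTE zy).
Qed.

Lemma swp_inj n (x y : 'I_n) : injective (swp x y).
Proof. exact: inv_inj (swpK x y). Qed.

Lemma card_swp n k (x y : 'I_n) (A : jvert n k) : #|swp x y @: val A| == k.
Proof. rewrite card_imset; last exact: swp_inj. exact: (valP A). Qed.

Definition jswap n k (x y : 'I_n) (A : jvert n k) : jvert n k :=
  exist _ (swp x y @: val A) (card_swp x y A).

Lemma jswapK n k (x y : 'I_n) : involutive (@jswap n k x y).
Proof.
move=> A; apply: val_inj => /=.
rewrite -imset_comp -[RHS]imset_id; apply: eq_imset => z /=; exact: swpK.
Qed.

Lemma jswap_inj n k (x y : 'I_n) : injective (@jswap n k x y).
Proof. exact: inv_inj (jswapK x y). Qed.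

Lemma jadj_swap n k i (x y : 'I_n) (u w : jvert n k) :
  jadj i (jswap x y u) (jswap x y w) = jadj i u w.
Proof.
rewrite /jadj /= -imsetI; last by move=> a b _ _; exact: swp_inj.
by rewrite card_imset //; exact: swp_inj.
Qed.

Lemma walks_swap n k i m (x y : 'I_n) (u v : jvert n k) :
  walks i m (jswap x y u) (jswap x y v) = walks i m u v.
Proof.
elim: m u => [|m IH] u /=; first by rewrite (inj_eq (@jswap_inj n k x y)).
rewrite (reindex_inj (@jswap_inj n k x y)) /=.
by apply: eq_big => w; rewrite ?jadj_swap ?IH.
Qed.

Lemma exists_twin n k i (u v : jvert n k) : u <> v -> 2 * k < n ->
  exists w, w <> v /\ forall m, walks i m u w = walks i m u v.
Proof.
move=> uv kn.
have cu : #|val u| = k by apply/eqP; exact: (valP u).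
have cv : #|val v| = k by apply/eqP; exact: (valP v).
have : val v :\: val u != set0.
  apply/negP; rewrite setD_eq0 => sub.
  have := (subset_leqif_cards sub).2; rewrite cu cv eqxx => /esym /eqP h.
  by apply: uv; apply: val_inj.
case/set0Pn => x; rewrite inE => /andP[xu xv].
have : ~: (val u :|: val v) != set0.
  rewrite -card_gt0.
  have h1 := cardsC (val u :|: val v).
  have h2 := leq_card_setU (val u) (val v).
  rewrite card_ord in h1.
  have h3 : #|val u :|: val v| <= 2 * k by rewrite cu cv in h2; rewrite mul2n -addnn; exact: h2.
  rewrite ltnNge; apply/negP => h4; rewrite leqn0 in h4.
  by rewrite (eqP h4) addn0 in h1; rewrite -h1 in kn; rewrite ltnNge h3 in kn.
case/set0Pn => y; rewrite !inE negb_or => /andP[yu yv].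
exists (jswap x y v); split.
  move=> /(congr1 val) /= h.
  have : y \in swp x y @: val v by apply/imsetP; exists x => //; rewrite /swp eqxx.
  by rewrite h (negbTE yv).
have su : jswap x y u = u.
  apply: val_inj => /=; rewrite -[RHS]imset_id; apply: eq_in_imset => z zu /=.
  rewrite /swp; case: eqP => [zx|_]; first by rewrite -zx zu in xu.
  by case: eqP => [zy|_] //; rewrite -zy zu in yu.
by move=> m; rewrite -{1}su walks_swap.
Qed.

Lemma walks_bound n k i m (u v : jvert n k) : walks i m u v <= #|{: jvert n k}| ^ m.
Proof.
elim: m u => [|m IH] u /=; first by rewrite expn0; case: (u == v).
set N := #|{: jvert n k}| in IH *.
rewrite expnS; apply: (@leq_trans (\sum_(w | jadj i u w) N ^ m)).
  by apply: leq_sum => w _; exact: IH.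
rewrite sum_nat_const leq_mul2r; apply/orP; right; exact: max_card.
Qed.

Lemma pair_sum (f : nat -> nat) M :
  \sum_(0 <= j < 2 * M) f j = \sum_(0 <= j < M) (f (2 * j) + f (2 * j + 1)).
Proof.
elim: M => [|M IH]; first by rewrite muln0 !big_geq.
rewrite [RHS]big_nat_recr //= -IH mulnS addnC addn2 big_nat_recr //= big_nat_recr //=.
by rewrite addn1 addnA.
Qed.


Lemma binom_id N :
  \sum_(0 <= j < N.+1) 'C(2 * N + 2, 2 * j + 1) = \sum_(0 <= j < N.+2) 'C(2 * N + 2, 2 * j).
Proof.
have E : 2 * N + 2 = (2 * N + 1).+1 by lia.
have e1 : \sum_(0 <= j < N.+1) 'C(2 * N + 2, 2 * j + 1) = \sum_(0 <= j < 2 * N.+1) 'C(2 * N + 1, j).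
  rewrite pair_sum; apply: eq_big_nat => j _.
  by rewrite E !addn1 binS addnC.
rewrite e1 big_nat_recl // bin0.
have e2 : \sum_(0 <= j < N.+1) 'C(2 * N + 2, 2 * j.+1) = \sum_(0 <= j < 2 * N.+1) 'C(2 * N + 1, j.+1).
  rewrite pair_sum; apply: eq_big_nat => j _.
  rewrite (_ : 2 * j.+1 = (2 * j + 1).+1); last by lia.
  by rewrite E binS [LHS]addnC (addn1 (2 * j)).
rewrite e2 (_ : 2 * N.+1 = (2 * N + 1).+1); last by lia.
rewrite big_nat_recl // bin0 [in RHS]big_nat_recr // bin_small ?addn0 //.
by rewrite /= addn0.
Qed.

End Comb.

Section Anal0.
Local Open Scope R_scope.


Lemma factE n : Factorial.fact n = n`!.
Proof. elim: n => // n IH; rewrite factS -IH /=; lia. Qed.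

Lemma sum_f_R0E (f : nat -> R) N : sum_f_R0 f N = (\sum_(0 <= k < N.+1) f k)%R.
Proof.
elim: N => [|N IH]; first by rewrite big_nat1.
by rewrite /= IH [in RHS]big_nat_recr.
Qed.

Lemma series_bigsum (T : Type) (r : seq T) (F : T -> nat -> R) (L : T -> R) :
  (forall w, is_series (F w) (L w)) ->
  is_series (fun N => (\sum_(w <- r) F w N)%R) (\sum_(w <- r) L w)%R.
Proof.
move=> h; elim: r => [|a r IH].
  rewrite big_nil; case: (exist_exp 0) => l /is_series_Reals hl.
  have := @is_series_scal R_AbsRing R_NormedModule R0 _ _ hl.
  rewrite /scal /= /mult /= Rmult_0_l.
  by apply: is_series_ext => N; rewrite Rmult_0_l big_nil.
rewrite big_cons; apply: is_series_ext (is_series_plus _ _ _ _ (h a) IH) => N.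
by rewrite big_cons.
Qed.

Lemma ex_series_expbound (c : nat -> R) (x K : R) :
  (forall m, Rabs (c m) <= K * (x ^ m / INR (Factorial.fact m))) ->
  ex_series (fun m => Rabs (c m)).
Proof.
move=> h; apply: (ex_series_le _ (fun m => K * (x ^ m / INR (Factorial.fact m)))%R).
  move=> m; rewrite /norm /= /abs /= Rabs_Rabsolu. exact: h.
apply: ex_series_scal.
case: (exist_exp x) => l hl; exists l.
move/is_series_Reals: hl; apply: is_series_ext => m /=.
by rewrite /Rdiv Rmult_comm.
Qed.

End Anal0.

Ltac mring := rewrite ?RmultE ?RplusE ?RinvE ?RpowE ?RdivE ?RminusE ?RoppE; field.

Section Anal.
Local Open Scope R_scope.

Lemma INR_expn a b : INR (a ^ b) = INR a ^ b.
Proof. elim: b => [|b IH] //; by rewrite expnS mult_INR IH. Qed.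

Lemma term_bound (s t D W : R) (p m : nat) : Rabs s = 1 -> 0 <= D -> 0 <= W <= D ^ p ->
  (m <= p)%N -> Rabs (s * t ^ p / INR (p`!) * W) <= (Rabs t * D) ^ p / INR (Factorial.fact m).
Proof.
move=> hs hD [hW0 hW] hmp.
rewrite factE /Rdiv !Rabs_mult hs (Rabs_pos_eq W) // Rabs_inv (Rabs_pos_eq (INR _) (pos_INR _)).
rewrite -RPow_abs Rmult_1_l Rpow_mult_distr.
have F1 : 0 < INR (m`!) by apply: lt_0_INR; apply/ltP; exact: fact_gt0.
have F2 : INR (m`!) <= INR (p`!) by apply: le_INR; apply/leP; exact: leq_fact.
have T0 : 0 <= Rabs t ^ p by apply: pow_le; exact: Rabs_pos.
apply: (Rle_trans _ (Rabs t ^ p * / INR (m`!) * W)).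
  apply: Rmult_le_compat_r => //; apply: Rmult_le_compat_l => //.
  exact: Rinv_le_contravar.
have : Rabs t ^ p * / INR (m`!) * W <= Rabs t ^ p * / INR (m`!) * D ^ p.
  apply: Rmult_le_compat_l => //; apply: Rmult_le_pos => //.
  by apply: Rlt_le; apply: Rinv_0_lt_compat.
move=> h; apply: Rle_trans h _; right; mring.
by apply/eqP; exact: (Rgt_not_eq _ _ F1).
Qed.

Lemma re_abs n k i t (u w : jvert n k) : ex_series (fun m => Rabs (re_term i t u w m)).
Proof.
apply: (ex_series_expbound (x := (Rabs t * INR #|{: jvert n k}|) ^ 2) (K := 1)) => m.
rewrite Rmult_1_l -pow_mult /re_term; apply: term_bound.
- by rewrite pow_1_abs.
- exact: pos_INR.
- split; first exact: pos_INR.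
  rewrite -INR_expn; apply: le_INR; apply/leP; exact: walks_bound.
- by rewrite leq_pmull.
Qed.

Lemma im_abs n k i t (u w : jvert n k) : ex_series (fun m => Rabs (im_term i t u w m)).
Proof.
apply: (ex_series_expbound (x := (Rabs t * INR #|{: jvert n k}|) ^ 2)
   (K := Rabs t * INR #|{: jvert n k}|)) => m.
have -> : Rabs t * INR #|{: jvert n k}| * (((Rabs t * INR #|{: jvert n k}|) ^ 2) ^ m / INR (Factorial.fact m))
   = (Rabs t * INR #|{: jvert n k}|) ^ (2 * m + 1)%N / INR (Factorial.fact m).
  rewrite pow_add -pow_mult pow_1; mring.
  apply/eqP; apply: Rgt_not_eq; apply: lt_0_INR; apply/ltP; rewrite factE; exact: fact_gt0.
rewrite /im_term; apply: term_bound.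
- by rewrite pow_1_abs.
- exact: pos_INR.
- split; first exact: pos_INR.
  rewrite -INR_expn; apply: le_INR; apply/leP; exact: walks_bound.
- by rewrite addn1 leqW // leq_pmull.
Qed.

End Anal.

Section Coef.
Local Open Scope ring_scope.

Definition alpha (N : nat) : R :=
  \sum_(0 <= j < N.+1) (((2 * j)%N`!)%:R * ((2 * (N - j))%N`!)%:R)^-1.
Definition beta (N : nat) : R :=
  \sum_(0 <= j < N.+1) (((2 * j + 1)%N`!)%:R * ((2 * (N - j) + 1)%N`!)%:R)^-1.

Lemma inv_fact_bin (a b : nat) :
  ((a`!)%:R * (b`!)%:R : R)^-1 = ('C(a + b, a))%:R / ((a + b)`!)%:R.
Proof.
have h := bin_fact (leq_addr b a); rewrite addKn in h.
rewrite -h [in RHS]natrM [in RHS]invfM mulrA divff ?mul1r //.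
  by rewrite natrM.
by rewrite pnatr_eq0 -lt0n bin_gt0 leq_addr.
Qed.

Lemma beta_alpha N : beta N = alpha N.+1.
Proof.
rewrite /beta /alpha.
transitivity (\sum_(0 <= j < N.+1) ('C(2 * N + 2, 2 * j + 1))%:R / (((2 * N + 2)%N`!)%:R : R)).
  apply: eq_big_nat => j /andP[_ hj]; rewrite inv_fact_bin.
  by have -> : (2 * j + 1 + (2 * (N - j) + 1) = 2 * N + 2)%N by lia.
transitivity (\sum_(0 <= j < N.+2) ('C(2 * N + 2, 2 * j))%:R / (((2 * N + 2)%N`!)%:R : R)); last first.
  apply: eq_big_nat => j /andP[_ hj]; rewrite inv_fact_bin.
  by have -> : (2 * j + 2 * (N.+1 - j) = 2 * N + 2)%N by lia.
by rewrite -!big_distrl /= -!natr_sum binom_id.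
Qed.

Definition eterm n k i (t : R) (u : jvert n k) (N : nat) : R :=
  (-1) ^+ N * t ^+ (2 * N)%N * (walks i (2 * N)%N u u)%:R * alpha N.

Lemma re_termE n k i t (u w : jvert n k) m :
  re_term i t u w m = (-1) ^+ m * t ^+ (2 * m)%N / ((2 * m)%N`!)%:R * (walks i (2 * m)%N u w)%:R.
Proof. by rewrite /re_term !RpowE !INRE. Qed.

Lemma im_termE n k i t (u w : jvert n k) m :
  im_term i t u w m = (-1) ^+ m * t ^+ (2 * m + 1)%N / ((2 * m + 1)%N`!)%:R * (walks i (2 * m + 1)%N u w)%:R.
Proof. by rewrite /im_term !RpowE !INRE. Qed.

Lemma walks_sq n k i p q (u : jvert n k) :
  (walks i (p + q) u u)%:R = \sum_w ((walks i p u w)%:R * (walks i q u w)%:R) :> R.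
Proof.
rewrite walks_add natr_sum; apply: eq_bigr => w _.
by rewrite natrM (walks_sym _ _ w).
Qed.

Lemma sumA n k i t (u : jvert n k) N :
  \sum_w sum_f_R0 (fun j => re_term i t u w j * re_term i t u w (N - j)) N =
  (-1) ^+ N * t ^+ (2 * N)%N * (walks i (2 * N)%N u u)%:R * alpha N.
Proof.
rewrite (eq_bigr _ (fun w _ => sum_f_R0E _ N)).
rewrite exchange_big /alpha big_distrr /=.
apply: eq_big_nat => j /andP[_ hj].
under eq_bigr do rewrite !re_termE.
have E1 : (-1) ^+ N = (-1) ^+ j * (-1) ^+ (N - j) :> R by rewrite -exprD subnKC.
have E2 : t ^+ (2 * N) = t ^+ (2 * j) * t ^+ (2 * (N - j)) by rewrite -exprD -mulnDr subnKC.
have E3 : (2 * N = 2 * j + 2 * (N - j))%N by lia.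
rewrite E1 E2 E3 walks_sq [RHS]mulrAC big_distrr /=; apply: eq_bigr => w _.
rewrite invfM; ring.
Qed.

Lemma sumB n k i t (u : jvert n k) N :
  \sum_w sum_f_R0 (fun j => im_term i t u w j * im_term i t u w (N - j)) N =
  (-1) ^+ N * t ^+ (2 * N.+1)%N * (walks i (2 * N.+1)%N u u)%:R * beta N.
Proof.
rewrite (eq_bigr _ (fun w _ => sum_f_R0E _ N)).
rewrite exchange_big /beta big_distrr.
apply: eq_big_nat => j /andP[_ hj].
under eq_bigr do rewrite !im_termE.
have E1 : (-1) ^+ N = (-1) ^+ j * (-1) ^+ (N - j) :> R by rewrite -exprD subnKC.
have E3 : (2 * N.+1 = (2 * j + 1) + (2 * (N - j) + 1))%N by lia.
have E2 : t ^+ (2 * N.+1) = t ^+ (2 * j + 1) * t ^+ (2 * (N - j) + 1) by rewrite -exprD E3.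
rewrite E1 E2 E3 walks_sq [RHS]mulrAC big_distrr /=; apply: eq_bigr => w _.
rewrite invfM; ring.
Qed.


Lemma coefE n k i t (u : jvert n k) N :
  \sum_w (sum_f_R0 (fun j => re_term i t u w j * re_term i t u w (N - j)) N +
          sum_f_R0 (fun j => im_term i t u w j * im_term i t u w (N - j)) N) =
  eterm i t u N - eterm i t u N.+1.
Proof.
rewrite big_split /= sumA sumB /eterm beta_alpha exprS.
rewrite ?RmultE; ring.
Qed.

End Coef.

Section Fin.
Local Open Scope ring_scope.
Lemma series_finsum (T : finType) (F : T -> nat -> R) (L : T -> R) :
  (forall w, is_series (F w) (L w)) -> is_series (fun N => \sum_w F w N) (\sum_w L w).
Proof. exact: series_bigsum. Qed.
Lemma finsum_ge2 (T : finType) (L : T -> R) a b : a != b -> (forall w, 0 <= L w) ->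
  L a + L b <= \sum_w L w.
Proof.
move=> ab h; rewrite (bigD1 a) //= (bigD1 b) /=; last by rewrite eq_sym.
by rewrite addrA lerDl; apply: sumr_ge0 => w _.
Qed.
End Fin.

Section Final.
Local Open Scope R_scope.

Lemma eterm0 n k i t (u : jvert n k) : eterm i t u 0 = 1%R.
Proof.
rewrite /eterm /alpha big_nat1 /= eqxx.
rewrite ?RmultE; rewrite !expr0 muln0 fact0 /= mul1r mulr1 invr1 mul1r.
by [].
Qed.

Lemma eterm_even_ge0 n k i t (u : jvert n k) M : (0 <= eterm i t u (2 * M))%R.
Proof.
rewrite /eterm ?RmultE.
have h1 : ((-1) ^+ (2 * M) = 1 :> R)%R by rewrite exprM sqrrN expr1n expr1n.
rewrite h1 mul1r; apply: mulr_ge0; first apply: mulr_ge0.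
- by rewrite exprM; apply: exprn_ge0; exact: sqr_ge0.
- exact: ler0n.
- rewrite /alpha; apply: sumr_ge0 => j _; rewrite invr_ge0; apply: mulr_ge0; exact: ler0n.
Qed.

Lemma no_pst n k i (u v : jvert n k) t re im : (2 * k < n)%N -> u <> v ->
  infinite_sum (re_term i t u v) re -> infinite_sum (im_term i t u v) im ->
  sqrt (re ^ 2 + im ^ 2) = 1 -> False.
Proof.
move=> lt uv hre him hs.
have [w0 [w0v hw]] := exists_twin i uv lt.
pose RE w := Series (re_term i t u w).
pose IM w := Series (im_term i t u w).
have hRE w : is_series (re_term i t u w) (RE w) by apply: Series_correct; apply: ex_series_Rabs; exact: re_abs.
have hIM w : is_series (im_term i t u w) (IM w) by apply: Series_correct; apply: ex_series_Rabs; exact: im_abs.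
have reV : RE v = re by apply: is_series_unique; apply/is_series_Reals.
have imV : IM v = im by apply: is_series_unique; apply/is_series_Reals.
have reW : RE w0 = re by rewrite -reV; apply: Series_ext => m; rewrite /re_term hw.
have imW : IM w0 = im by rewrite -imV; apply: Series_ext => m; rewrite /im_term hw.
have hsq : re * re + im * im = 1.
  have h0 : 0 <= re ^ 2 + im ^ 2 by nra.
  have := sqrt_sqrt _ h0; rewrite hs; lra.
pose L w := RE w * RE w + IM w * IM w.
have hprod w : is_series (fun N => sum_f_R0 (fun j => re_term i t u w j * re_term i t u w (N - j)) N +
      sum_f_R0 (fun j => im_term i t u w j * im_term i t u w (N - j)) N) (L w).
  exact: (is_series_plus _ _ _ _ (is_series_mult _ _ _ _ (hRE w) (hRE w) (re_abs i t u w) (re_abs i t u w))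
                         (is_series_mult _ _ _ _ (hIM w) (hIM w) (im_abs i t u w) (im_abs i t u w))).
have hS := series_finsum hprod.
have hT : is_series (fun N => eterm i t u N - eterm i t u N.+1) (\big[Rplus/0]_w L w).
  by apply: is_series_ext hS => N; exact: (coefE i t u N).
set S := \big[Rplus/0]_w L w in hT.
have S2 : 2 <= S.
  have Lge0 w : 0 <= L w by rewrite /L; nra.
  have : L v + L w0 <= S.
    apply/RleP; apply: finsum_ge2; first by apply/eqP => e; apply: w0v.
    by move=> w; apply/RleP.
  by rewrite /L reV imV reW imW hsq; lra.
move/is_series_Reals: hT => hT.
have tele N : sum_f_R0 (fun N => eterm i t u N - eterm i t u N.+1) N = 1 - eterm i t u N.+1.
  elim: N => [|N IH] /=; first by rewrite eterm0.
  by rewrite IH; mring.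
have [N0 hN0] := hT 1 Rlt_0_1.
have := hN0 (2 * N0 + 1)%N; rewrite tele.
have e0 := eterm_even_ge0 i t u N0.+1.
rewrite (_ : ((2 * N0 + 1).+1 = 2 * N0.+1)%N); last by lia.
move/RleP: e0 => e0.
rewrite /Rdist => h; have := h ltac:(apply/leP; lia).
move=> h'; have := Rle_abs (- (1 - eterm i t u (2 * N0.+1) - S)).
have e1 : 0 <= eterm i t u (2 * N0.+1) by exact: e0.
rewrite Rabs_Ropp; lra.
Qed.

End Final.

Open Scope nat_scope.

Theorem mainTheorem2 (n k i : nat) (hk : 1 <= k) (hn : 2 * k <= n) (hi : i < k) :
  admits_PST n k i -> n = 2 * k.
Proof.
move=> [u [v [tau [uv [tpos [re [im [hre [him hs]]]]]]]]].
case: (ltngtP (2 * k) n) => [lt|lt|->] //.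
  by exfalso; exact: (no_pst lt uv hre him hs).
by rewrite ltnNge hn in lt.
Qed.
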